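(* Let $P$ be a $3$-nice twisted $n$-gon with corner invariants $(x_0,\dots,x_{2n-1})$ (indices taken modulo $2n$), and let $P'$ be the twisted $n$-gon defined by $P'_i=P_{i-2}P_{i+1}\cap P_{i-1}P_{i+2}$, with corner invariants $(x'_0,\dots,x'_{2n-1})$. Then, whenever all quantities involved are finite and the denominators are nonzero, for every $i$: $$x'_{2i}=x_{2i-2}\cdot\frac{x_{2i-4}+x_{2i-1}-1}{x_{2i-2}x_{2i-1}-(1-x_{2i+1})(1-x_{2i-4})},\qquad x'_{2i+1}=x_{2i+3}\cdot\frac{x_{2i+2}+x_{2i+5}-1}{x_{2i+2}x_{2i+3}-(1-x_{2i+5})(1-x_{2i})}.$$
   Context: A twisted $n$-gon is a map $P:\mathbb{Z}\to\mathbb{RP}^2$ with every three consecutive points non-collinear and $P_{i+n}=M(P_i)$ for a fixed $M\in\mathrm{PGL}_3(\mathbb{R})$. $P$ is $3$-nice if $P_i,P_{i+1},P_{i+3},P_{i+4}$ are in general position for every $i$. $XY$ denotes the line through $X$ and $Y$. (The map $P\mapsto P'$ is the deep diagonal map $T_3$ with an index shift.) Inverse cross ratio: for four collinear points $A,B,C,D$, map their line projectively to the $x$-axis with coordinates $a,b,c,d$ and set $\chi(A,B,C,D)=\frac{(a-b)(c-d)}{(a-c)(b-d)}$ (value in $\mathbb{R}\cup\{\infty\}$, projectively invariant). Corner invariants: $x_{2i}=\chi(P_{i-2},P_{i-1},P_{i-2}P_{i-1}\cap P_iP_{i+1},P_{i-2}P_{i-1}\cap P_{i+1}P_{i+2})$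 and $x_{2i+1}=\chi(P_{i+2},P_{i+1},P_{i+2}P_{i+1}\cap P_iP_{i-1},P_{i+2}P_{i+1}\cap P_{i-1}P_{i-2})$, with $x_{j+2n}=x_j$. *)

(* Defs.v *)
From HB Require Import structures.
From mathcomp Require Import all_boot all_order all_algebra.
From mathcomp Require Import reals.
Set Implicit Arguments. Unset Strict Implicit. Unset Printing Implicit Defensive.
Import Order.TTheory GRing.Theory Num.Theory.
Local Open Scope ring_scope.

(* Points of RP^2 are represented by nonzero homogeneous coordinate row
   vectors in R^3; a projective transformation M in PGL_3 acts by v |-> v *m M. *)

Section Proj.
Variable R : realType.

Definition vec3 (a b c : R) : 'rV[R]_3 :=
  \row_(j < 3) (if val j == 0%N then a else if val j == 1%N then b else c).

Definition proj_eq (u v : 'rV[R]_3) : Prop := exists k : R, k != 0 /\ u = k *: v.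

Definition det3 (u v w : 'rV[R]_3) : R :=
  \det (\matrix_(i < 3) (if val i == 0%N then u else if val i == 1%N then v else w)).

(* Q (a point, nonzero) is the intersection point XY \cap ZW of the lines XY
   and ZW, where X <> Y, Z <> W (as points of RP^2) and the two lines differ. *)
Definition meet (X Y Z W Q : 'rV[R]_3) : Prop :=
  [/\ (X != 0 /\ Y != 0 /\ ~ proj_eq X Y),
      (Z != 0 /\ W != 0 /\ ~ proj_eq Z W),
      ~ (det3 X Y Z = 0 /\ det3 X Y W = 0),
      Q != 0 & (det3 X Y Q = 0 /\ det3 Z W Q = 0)].

(* r is the (finite) inverse cross ratio chi(A,B,C,D): some projective
   transformation M maps the line of A,B,C,D to the x-axis, with A,B,C,D
   going to the points with coordinates a,b,c,d, and
   r = (a-b)(c-d)/((a-c)(b-d)), the denominator being nonzero. *)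
Definition is_chi (A B C D : 'rV[R]_3) (r : R) : Prop :=
  exists M : 'M[R]_3, M \in unitmx /\
  exists a b c d : R,
    [/\ proj_eq (A *m M) (vec3 a 0 1), proj_eq (B *m M) (vec3 b 0 1),
        (proj_eq (C *m M) (vec3 c 0 1) /\ proj_eq (D *m M) (vec3 d 0 1)),
        (a - c) * (b - d) != 0 &
        r = (a - b) * (c - d) / ((a - c) * (b - d))].

Definition twisted_ngon (n : nat) (P : int -> 'rV[R]_3) : Prop :=
  (forall i : int, det3 (P i) (P (i + 1)) (P (i + 2)) != 0) /\
  exists M : 'M[R]_3, M \in unitmx /\
    forall i : int, proj_eq (P (i + n%:Z)) (P i *m M).

Definition gen_pos4 (A B C D : 'rV[R]_3) : Prop :=
  [/\ det3 A B C != 0, det3 A B D != 0, det3 A C D != 0 & det3 B C D != 0].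

Definition nice3 (P : int -> 'rV[R]_3) : Prop :=
  forall i : int, gen_pos4 (P i) (P (i + 1)) (P (i + 3)) (P (i + 4)).

Definition corner_even (P : int -> 'rV[R]_3) (i : int) (r : R) : Prop :=
  exists Q1 Q2 : 'rV[R]_3,
    [/\ meet (P (i - 2)) (P (i - 1)) (P i) (P (i + 1)) Q1,
        meet (P (i - 2)) (P (i - 1)) (P (i + 1)) (P (i + 2)) Q2 &
        is_chi (P (i - 2)) (P (i - 1)) Q1 Q2 r].

Definition corner_odd (P : int -> 'rV[R]_3) (i : int) (r : R) : Prop :=
  exists Q1 Q2 : 'rV[R]_3,
    [/\ meet (P (i + 2)) (P (i + 1)) (P i) (P (i - 1)) Q1,
        meet (P (i + 2)) (P (i + 1)) (P (i - 1)) (P (i - 2)) Q2 &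
        is_chi (P (i + 2)) (P (i + 1)) Q1 Q2 r].

Definition corner_invariants (P : int -> 'rV[R]_3) (x : int -> R) : Prop :=
  forall i : int, corner_even P i (x (2 * i)) /\ corner_odd P i (x (2 * i + 1)).

End Proj.

(* Main.v *)
Require Import Defs.
From HB Require Import structures.
From mathcomp Require Import all_boot all_order all_algebra.
From mathcomp Require Import reals.
From mathcomp Require Import ring.
Import Order.TTheory GRing.Theory Num.Theory.
Local Open Scope ring_scope.

Module Aux.
Set Implicit Arguments. Unset Strict Implicit. Unset Printing Implicit Defensive.

Lemma det33 (R : comNzRingType) (A : 'M[R]_3) : \det A =
  A 0 0 * (A 1 1 * A 2 2 - A 1 2 * A 2 1)
  - A 0 1 * (A 1 0 * A 2 2 - A 1 2 * A 2 0)
  + A 0 2 * (A 1 0 * A 2 1 - A 1 1 * A 2 0).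
Proof.
pose f (i j : nat) := A (inord i) (inord j).
have HA : A = \matrix_(i, j) f i j by apply/matrixP => i j; rewrite mxE /f !inord_val.
rewrite [in LHS]HA.
rewrite (expand_det_row _ 0) !big_ord_recl big_ord0 /cofactor.
rewrite !(expand_det_row _ 0) !big_ord_recl !big_ord0 /cofactor !det_mx11 !mxE /=.
rewrite /f /bump /=.
have -> : (inord 0 : 'I_3) = 0 by apply/val_inj; rewrite /= inordK.
have -> : (inord 1 : 'I_3) = 1 by apply/val_inj; rewrite /= inordK.
have -> : (inord 2 : 'I_3) = 2 by apply/val_inj; rewrite /= inordK.
rewrite !expr0 ?expr1 ?expr2.
ring.
Qed.

Section Geo.
Variable R : realType.
Implicit Types (u v w X Y Z W Q U V A B C D : 'rV[R]_3).

Definition Dtr (a b c : R * R * R) : R :=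
  a.1.1 * (b.1.2 * c.2 - b.2 * c.1.2) - a.1.2 * (b.1.1 * c.2 - b.2 * c.1.1)
  + a.2 * (b.1.1 * c.1.2 - b.1.2 * c.1.1).
Definition cv u : R * R * R := (u 0 0, u 0 1, u 0 2).

Lemma det3E u v w : det3 u v w = Dtr (cv u) (cv v) (cv w).
Proof. by rewrite /det3 det33 !mxE /= /Dtr /=. Qed.

Lemma row3P u v : u 0 0 = v 0 0 -> u 0 1 = v 0 1 -> u 0 2 = v 0 2 -> u = v.
Proof.
move=> h0 h1 h2; apply/rowP => j.
case: j => [[|[|[|m]]] Hj] //.
- by rewrite (_ : Ordinal Hj = 0) //; apply/val_inj.
- by rewrite (_ : Ordinal Hj = 1) //; apply/val_inj.
- by rewrite (_ : Ordinal Hj = 2) //; apply/val_inj.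
Qed.

Lemma rowv_neq0 u : u != 0 -> [\/ u 0 0 != 0, u 0 1 != 0 | u 0 2 != 0].
Proof.
move=> h.
case: (eqVneq (u 0 0) 0) => h0; last by apply: Or31.
case: (eqVneq (u 0 1) 0) => h1; last by apply: Or32.
case: (eqVneq (u 0 2) 0) => h2; last by apply: Or33.
by move/eqP: h; case; apply: row3P; rewrite mxE.
Qed.

Definition comb U V W (t : R * R * R) := t.1.1 *: U + t.1.2 *: V + t.2 *: W.

Lemma det3_comb U V W t1 t2 t3 :
  det3 (comb U V W t1) (comb U V W t2) (comb U V W t3) = Dtr t1 t2 t3 * det3 U V W.
Proof. rewrite !det3E /Dtr /cv /comb /= !mxE /=. ring. Qed.


Lemma div_helper (a b c d : R) : d != 0 -> a * d - c * b = 0 -> a = c / d * b.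
Proof.
move=> hd h; apply/(mulIf hd).
rewrite (_ : c / d * b * d = c * b); last by field.
by apply/eqP; rewrite -subr_eq0 h.
Qed.



Lemma sumsq3_eq0 (a b c : R) : a * a + b * b + c * c = 0 -> [/\ a = 0, b = 0 & c = 0].
Proof.
move=> h.
have ha := sqr_ge0 a; have hb := sqr_ge0 b; have hc := sqr_ge0 c.
rewrite -!expr2 in h.
have /andP[/eqP hab /eqP hc0] : (a ^+ 2 + b ^+ 2 == 0) && (c ^+ 2 == 0).
  by rewrite -paddr_eq0 ?h // addr_ge0.
move/eqP: hab; rewrite paddr_eq0 // => /andP[/eqP ha0 /eqP hb0].
by split; apply/eqP; rewrite -sqrf_eq0; apply/eqP.
Qed.
End Geo.


Section Geo2.
Variable R : realType.
Implicit Types (u v w X Y Z W Q U V A B C D : 'rV[R]_3).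

Lemma pe_helper X Y (a : R) : X != 0 -> X 0 0 = a * Y 0 0 -> X 0 1 = a * Y 0 1 ->
  X 0 2 = a * Y 0 2 -> proj_eq X Y.
Proof.
move=> hX e0 e1 e2; exists a.
have eX : X = a *: Y by apply: row3P; rewrite !mxE.
split=> //; apply/negP => /eqP k0; move: hX; rewrite eX k0 scale0r eqxx //.
Qed.

Lemma span_lemma X Y Q : X != 0 -> Y != 0 -> ~ proj_eq X Y -> det3 X Y Q = 0 ->
  exists s t, Q = s *: X + t *: Y.
Proof.
move=> hX hY hXY hQ.
set c0 := X 0 1 * Y 0 2 - X 0 2 * Y 0 1.
set c1 := X 0 2 * Y 0 0 - X 0 0 * Y 0 2.
set c2 := X 0 0 * Y 0 1 - X 0 1 * Y 0 0.
set cc := c0 * c0 + c1 * c1 + c2 * c2.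
have hcc : cc != 0.
  apply/eqP => /sumsq3_eq0 [e0 e1 e2]; apply: hXY.
  case: (rowv_neq0 hY) => h;
  [apply: (@pe_helper _ _ (X 0 0 / Y 0 0)) | apply: (@pe_helper _ _ (X 0 1 / Y 0 1)) |
   apply: (@pe_helper _ _ (X 0 2 / Y 0 2))] => //; apply: div_helper => //;
  first [ by rewrite subrr
        | by transitivity c0; [rewrite /c0; ring | exact: e0]
        | by transitivity (-c0); [rewrite /c0; ring | rewrite e0 oppr0]
        | by transitivity c1; [rewrite /c1; ring | exact: e1]
        | by transitivity (-c1); [rewrite /c1; ring | rewrite e1 oppr0]
        | by transitivity c2; [rewrite /c2; ring | exact: e2]
        | by transitivity (-c2); [rewrite /c2; ring | rewrite e2 oppr0] ].
move: hQ; rewrite det3E /Dtr /cv /= => hQ.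
set N1 := (Q 0 0 * (Y 0 1 * c2 - Y 0 2 * c1) - Q 0 1 * (Y 0 0 * c2 - Y 0 2 * c0)
        + Q 0 2 * (Y 0 0 * c1 - Y 0 1 * c0)).
set N2 := (X 0 0 * (Q 0 1 * c2 - Q 0 2 * c1) - X 0 1 * (Q 0 0 * c2 - Q 0 2 * c0)
        + X 0 2 * (Q 0 0 * c1 - Q 0 1 * c0)).
exists (N1 / cc), (N2 / cc).
have k0 : cc * Q 0 0 = N1 * X 0 0 + N2 * Y 0 0.
  rewrite -[RHS]addr0 -[X in _ + X](mul0r c0) -hQ /cc /N1 /N2 /c0 /c1 /c2; ring.
have k1 : cc * Q 0 1 = N1 * X 0 1 + N2 * Y 0 1.
  rewrite -[RHS]addr0 -[X in _ + X](mul0r c1) -hQ /cc /N1 /N2 /c0 /c1 /c2; ring.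
have k2 : cc * Q 0 2 = N1 * X 0 2 + N2 * Y 0 2.
  rewrite -[RHS]addr0 -[X in _ + X](mul0r c2) -hQ /cc /N1 /N2 /c0 /c1 /c2; ring.
apply: row3P; rewrite !mxE; apply/(mulfI hcc).
- by rewrite k0; field.
- by rewrite k1; field.
- by rewrite k2; field.
Qed.


Lemma det3_lin3 A B (s t : R) X Y :
  det3 A B (s *: X + t *: Y) = s * det3 A B X + t * det3 A B Y.
Proof. rewrite !det3E /Dtr /cv /= !mxE /=; ring. Qed.

Lemma det3_lin12 (a b c d : R) U V W :
  det3 (a *: U + b *: V) (c *: U + d *: V) W = (a * d - b * c) * det3 U V W.
Proof. rewrite !det3E /Dtr /cv /= !mxE /=; ring. Qed.

Lemma det3_cyc A B C : det3 A B C = det3 B C A.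
Proof. rewrite !det3E /Dtr /cv /=; ring. Qed.

Lemma det3_sw A B C : det3 A B C = - det3 B A C.
Proof. rewrite !det3E /Dtr /cv /=; ring. Qed.

Lemma det3_span0 (a b c d e f: R) U V :
  det3 (a *: U + b *: V) (c *: U + d *: V) (e *: U + f *: V) = 0.
Proof. rewrite !det3E /Dtr /cv /= !mxE /=; ring. Qed.

Lemma meet_first X Y Z W Q : meet X Y Z W Q ->
  exists s t, Q = s *: X + t *: Y /\ s * det3 Z W X + t * det3 Z W Y = 0.
Proof.
case=> [[hX [hY hXY]] _ _ _ [h1 h2]].
have [s [t eQ]] := span_lemma hX hY hXY h1.
by exists s, t; split=> //; rewrite -det3_lin3 -eQ.
Qed.

Lemma meet_second X Y Z W Q : meet X Y Z W Q ->
  exists s t, Q = s *: Z + t *: W /\ s * det3 X Y Z + t * det3 X Y W = 0.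
Proof.
case=> [_ [hZ [hW hZW]] _ _ [h1 h2]].
have [s [t eQ]] := span_lemma hZ hW hZW h2.
by exists s, t; split=> //; rewrite -det3_lin3 -eQ.
Qed.

Lemma dep2 U V Z W (a b c d : R) : Z = a *: U + b *: V -> W = c *: U + d *: V ->
  Z != 0 -> W != 0 -> ~ proj_eq Z W -> a * d - b * c != 0.
Proof.
move=> eZ eW hZ hW hZW; apply/eqP => h; apply: hZW.
case: (eqVneq c 0) => hc.
- have hd : d != 0.
    by apply/eqP => hd; move: hW; rewrite eW hc hd !scale0r addr0 eqxx.
  have ha : a = 0.
    by move: h; rewrite hc mulr0 subr0 => /eqP; rewrite mulf_eq0 (negPf hd) orbF => /eqP.
  exists (b / d); split.
    by apply/eqP => hk; move: hZ; rewrite eZ ha scale0r add0r;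
       move: hk => /eqP; rewrite mulf_eq0 invr_eq0 (negPf hd) orbF => /eqP ->; rewrite scale0r eqxx.
  by rewrite eZ eW ha hc !scale0r !add0r scalerA divfK.
- exists (a / c); split.
    apply/eqP => hk; move: hZ; rewrite eZ.
    have ha : a = 0 by move/eqP: hk; rewrite mulf_eq0 invr_eq0 (negPf hc) orbF => /eqP.
    have hb : b = 0.
      by move: h; rewrite ha mul0r sub0r => /eqP; rewrite oppr_eq0 mulf_eq0 (negPf hc) orbF => /eqP.
    by rewrite ha hb !scale0r addr0 eqxx.
  rewrite eZ eW scalerDr !scalerA divfK //.
  congr (_ + _); congr (_ *: _).
  apply/eqP; rewrite -subr_eq0.
  have -> : b - a / c * d = -(a * d - b * c) / c by field.
  by rewrite h oppr0 mul0r.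
Qed.


Lemma chi_pt X U V (M : 'M[R]_3) (x1 x2 a : R) :
  proj_eq (X *m M) (vec3 a 0 1) -> X = x1 *: U + x2 *: V ->
  exists k, [/\ k != 0, k * a = x1 * (U *m M) 0 0 + x2 * (V *m M) 0 0
    & k = x1 * (U *m M) 0 2 + x2 * (V *m M) 0 2].
Proof.
move=> [k [hk e]] eX; exists k; split=> //.
- have := congr1 (fun m : 'rV[R]_3 => m 0 0) e.
  by rewrite eX mulmxDl -!scalemxAl !mxE /= => ->.
- have := congr1 (fun m : 'rV[R]_3 => m 0 2) e.
  by rewrite eX mulmxDl -!scalemxAl !mxE /= mulr1 => ->.
Qed.

Lemma chi_alg (u0 u2 v0 v2 a1 a2 b1 b2 c1 c2 d1 d2 kA kB kC kD a b c d r : R) :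
  kA != 0 -> kA * a = a1 * u0 + a2 * v0 -> kA = a1 * u2 + a2 * v2 ->
  kB != 0 -> kB * b = b1 * u0 + b2 * v0 -> kB = b1 * u2 + b2 * v2 ->
  kC != 0 -> kC * c = c1 * u0 + c2 * v0 -> kC = c1 * u2 + c2 * v2 ->
  kD != 0 -> kD * d = d1 * u0 + d2 * v0 -> kD = d1 * u2 + d2 * v2 ->
  (a - c) * (b - d) != 0 -> r = (a - b) * (c - d) / ((a - c) * (b - d)) ->
  [/\ r = (a1*b2 - a2*b1) * (c1*d2 - c2*d1) / ((a1*c2 - a2*c1) * (b1*d2 - b2*d1)),
      a1*c2 - a2*c1 != 0 & b1*d2 - b2*d1 != 0].
Proof.
move=> hA eA0 eA2 hB eB0 eB2 hC eC0 eC2 hD eD0 eD2 hden ->.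
set De := u0 * v2 - u2 * v0.
have gen : forall (kX kY x y x1 x2 y1 y2 : R), kX * x = x1 * u0 + x2 * v0 ->
   kX = x1 * u2 + x2 * v2 -> kY * y = y1 * u0 + y2 * v0 -> kY = y1 * u2 + y2 * v2 ->
   kX * kY * (x - y) = (x1 * y2 - x2 * y1) * De.
  move=> kX kY x y x1 x2 y1 y2 e1 e2 e3 e4.
  rewrite (_ : kX * kY * (x - y) = (kX * x) * kY - kX * (kY * y)); last by ring.
  by rewrite e1 e3 e2 e4 /De; ring.
have eAB := gen _ _ _ _ _ _ _ _ eA0 eA2 eB0 eB2.
have eCD := gen _ _ _ _ _ _ _ _ eC0 eC2 eD0 eD2.
have eAC := gen _ _ _ _ _ _ _ _ eA0 eA2 eC0 eC2.
have eBD := gen _ _ _ _ _ _ _ _ eB0 eB2 eD0 eD2.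
have hac : a - c != 0 by move: hden; rewrite mulf_eq0 negb_or => /andP[].
have hbd : b - d != 0 by move: hden; rewrite mulf_eq0 negb_or => /andP[].
have nAC : (a1 * c2 - a2 * c1) * De != 0 by rewrite -eAC !mulf_neq0.
have nBD : (b1 * d2 - b2 * d1) * De != 0 by rewrite -eBD !mulf_neq0.
have hDe : De != 0 by move: nAC; rewrite mulf_eq0 negb_or => /andP[].
have hac' : a1 * c2 - a2 * c1 != 0 by move: nAC; rewrite mulf_eq0 negb_or => /andP[].
have hbd' : b1 * d2 - b2 * d1 != 0 by move: nBD; rewrite mulf_eq0 negb_or => /andP[].
split=> //.
rewrite (_ : (a - b) * (c - d) / ((a - c) * (b - d)) =
   (kA * kB * (a - b)) * (kC * kD * (c - d)) / ((kA * kC * (a - c)) * (kB * kD * (b - d)))); last by field; rewrite ?hA ?hB ?hC ?hD ?hac ?hbd.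
rewrite eAB eCD eAC eBD; field.
by rewrite hDe hac' hbd'.
Qed.

Lemma chi_lemma A B C D U V (r a1 a2 b1 b2 c1 c2 d1 d2 : R) :
  is_chi A B C D r -> A = a1 *: U + a2 *: V -> B = b1 *: U + b2 *: V ->
  C = c1 *: U + c2 *: V -> D = d1 *: U + d2 *: V ->
  [/\ r = (a1*b2 - a2*b1) * (c1*d2 - c2*d1) / ((a1*c2 - a2*c1) * (b1*d2 - b2*d1)),
      a1*c2 - a2*c1 != 0 & b1*d2 - b2*d1 != 0].
Proof.
move=> [M [_ [a [b [c [d [pA pB [pC pD] hden hr]]]]]]] eA eB eC eD.
have [kA [hA eA0 eA2]] := chi_pt pA eA.
have [kB [hB eB0 eB2]] := chi_pt pB eB.
have [kC [hC eC0 eC2]] := chi_pt pC eC.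
have [kD [hD eD0 eD2]] := chi_pt pD eD.
exact: (chi_alg hA eA0 eA2 hB eB0 eB2 hC eC0 eC2 hD eD0 eD2 hden hr).
Qed.


Lemma lin_solve (s t a b : R) : a != 0 -> s * a + t * b = 0 -> s = - t * b / a.
Proof.
move=> ha h; apply/(mulIf ha); rewrite (_ : - t * b / a * a = - (t * b)); last by field.
by apply/eqP; rewrite -subr_eq0 opprK h.
Qed.

Lemma corner_lemma A B C1 D1 C2 D2 Q1 Q2 r :
  meet A B C1 D1 Q1 -> meet A B C2 D2 Q2 -> is_chi A B Q1 Q2 r ->
  det3 C1 D1 A != 0 -> det3 C2 D2 B != 0 ->
  r = 1 - det3 C1 D1 B * det3 C2 D2 A / (det3 C1 D1 A * det3 C2 D2 B).
Proof.
move=> m1 m2 ch h1 h2.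
have [s1 [t1 [e1 c1]]] := meet_first m1.
have [s2 [t2 [e2 c2]]] := meet_first m2.
have eA : A = 1 *: A + 0 *: B by rewrite scale1r scale0r addr0.
have eB : B = 0 *: A + 1 *: B by rewrite scale1r scale0r add0r.
have [-> n1 n2] := chi_lemma ch eA eB e1 e2.
move: n1 n2; rewrite !mul1r !mul0r subr0 sub0r oppr_eq0 => n1 n2.
have es1 := lin_solve h1 c1.
have et2 : t2 = - s2 * det3 C2 D2 A / det3 C2 D2 B.
  by apply: lin_solve => //; rewrite addrC.
rewrite es1 et2; field.
by rewrite h1 h2 n1 n2.
Qed.

End Geo2.

Section Alg. Variable R : realType.

Lemma xp_simplify (A1 A2 B1 B2 C1 C2 sa ta sb tb sc tc td xp : R) :
  A2 != 0 -> B2 != 0 -> C2 != 0 ->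
  sa * A1 + ta * A2 = 0 -> sb * B1 + tb * B2 = 0 -> sc * C1 + tc * C2 = 0 ->
  sa * tc - ta * sc != 0 -> sb * td != 0 ->
  xp = (sa * tb - ta * sb) * (sc * td) / ((sa * tc - ta * sc) * (sb * td)) ->
  xp = (A1 * B2 - A2 * B1) * C2 / ((A1 * C2 - A2 * C1) * B2) /\ A1 * C2 - A2 * C1 != 0.
Proof.
move=> hA2 hB2 hC2 hA hB hC hAC hBD ->.
have eta : ta = - sa * A1 / A2.
  apply/(mulIf hA2); rewrite (_ : - sa * A1 / A2 * A2 = - (sa * A1)); last by field.
  by apply/eqP; rewrite -subr_eq0 opprK addrC hA.
have etb : tb = - sb * B1 / B2.
  apply/(mulIf hB2); rewrite (_ : - sb * B1 / B2 * B2 = - (sb * B1)); last by field.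
  by apply/eqP; rewrite -subr_eq0 opprK addrC hB.
have etc : tc = - sc * C1 / C2.
  apply/(mulIf hC2); rewrite (_ : - sc * C1 / C2 * C2 = - (sc * C1)); last by field.
  by apply/eqP; rewrite -subr_eq0 opprK addrC hC.
have eAC : sa * tc - ta * sc = sa * sc * (A1 * C2 - A2 * C1) / (A2 * C2).
  by rewrite eta etc; field; rewrite ?hA2 ?hC2.
have hsa : sa != 0 by move: hAC; rewrite eAC; apply: contra => /eqP ->; rewrite !mul0r.
have hsc : sc != 0 by move: hAC; rewrite eAC; apply: contra => /eqP ->; rewrite mulr0 !mul0r.
have hN : A1 * C2 - A2 * C1 != 0 by move: hAC; rewrite eAC; apply: contra => /eqP ->; rewrite mulr0 !mul0r.
have hsb : sb != 0 by move: hBD; apply: contra => /eqP ->; rewrite mul0r.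
have htd : td != 0 by move: hBD; apply: contra => /eqP ->; rewrite mulr0.
split=> //.
rewrite eta etb etc; field.
rewrite ?hA2 ?hB2 ?hC2 ?hsa ?hsb ?hsc ?htd ?hN /=.
rewrite (_ : sa * (- sc * C1) * A2 + - (- sa * A1 * sc) * C2 = sa * sc * (A1 * C2 - A2 * C1)); last by ring.
by rewrite !mulf_neq0.
Qed.

Lemma one_minus (x a b c : R) : c != 0 -> x = 1 - a / c -> c - a = b -> x = b / c.
Proof. by move=> hc -> <-; field. Qed.

Lemma final_alg (xp xa xb xc xd N D PA DA PB DB CB PC DC CD DD : R) :
  D != 0 -> DA != 0 -> DB != 0 -> DC != 0 -> DD != 0 ->
  xp = N / D -> xa = PA / DA -> xb = PB / DB -> 1 - xb = CB / DB ->
  xc = PC / DC -> 1 - xd = CD / DD ->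
  xa * xc - (1 - xd) * (1 - xb) != 0 ->
  N * (PA * PC * DD * DB - CD * CB * DA * DC) = D * PA * (PB * DC + PC * DB - DB * DC) * DD ->
  xp = xa * ((xb + xc - 1) / (xa * xc - (1 - xd) * (1 - xb))).
Proof.
move=> hD hDA hDB hDC hDD exp exa exb ecb exc ecd hden key.
have eden : xa * xc - (1 - xd) * (1 - xb) =
   (PA * PC * DD * DB - CD * CB * DA * DC) / (DA * DC * DD * DB).
  by rewrite ecd ecb exa exc; field; rewrite ?hDA ?hDB ?hDC ?hDD.
have hK : PA * PC * DD * DB - CD * CB * DA * DC != 0.
  by move: hden; rewrite eden; apply: contra => /eqP ->; rewrite mul0r.
rewrite eden exp exa exb exc.
apply/(mulIf hD).
rewrite (_ : N / D * D = N); last by field.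
rewrite (_ : N = N * (PA * PC * DD * DB - CD * CB * DA * DC) / (PA * PC * DD * DB - CD * CB * DA * DC)); last by field.
rewrite key; field.
by rewrite ?hK ?hDA ?hDB ?hDC ?hDD ?hD.
Qed.


Lemma core_vec_e (F1 F2 F3 m n q o z u v : 'rV[R]_3) (tm tq tu tv : R * R * R)
  (sa ta sb tb sc tc td xp xa xb xc xd : R) :
  m = comb F1 F2 F3 tm ->
  n = comb F1 F2 F3 (1,0,0) ->
  q = comb F1 F2 F3 tq ->
  o = comb F1 F2 F3 (0,1,0) ->
  z = comb F1 F2 F3 (0,0,1) ->
  u = comb F1 F2 F3 tu ->
  v = comb F1 F2 F3 tv ->
  det3 F1 F2 F3 != 0 ->
  sa * det3 m o n + ta * det3 m o z = 0 -> sb * det3 q u n + tb * det3 q u z = 0 -> sc * det3 o v n + tc * det3 o v z = 0 ->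
  sa * tc - ta * sc != 0 -> sb * td != 0 ->
  xp = (sa * tb - ta * sb) * (sc * td) / ((sa * tc - ta * sc) * (sb * td)) ->
  det3 m o z != 0 -> det3 q u z != 0 -> det3 o v z != 0 ->
  xa = 1 - det3 o z q * det3 z u n / (det3 o z n * det3 z u q) -> det3 o z n != 0 -> det3 z u q != 0 ->
  xb = 1 - det3 q o n * det3 o z m / (det3 q o m * det3 o z n) -> det3 q o m != 0 -> det3 o z n != 0 ->
  xc = 1 - det3 o q z * det3 q n u / (det3 o q u * det3 q n z) -> det3 o q u != 0 -> det3 q n z != 0 ->
  xd = 1 - det3 z o u * det3 o q v / (det3 z o v * det3 o q u) -> det3 z o v != 0 -> det3 o q u != 0 ->
  xa * xc - (1 - xd) * (1 - xb) != 0 ->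
  xp = xa * ((xb + xc - 1) / (xa * xc - (1 - xd) * (1 - xb))).
Proof.
move=> Hm Hn Hq Ho Hz Hu Hv hF hA hB hC hAC hBD hxp hA2 hB2 hC2 hxa na1 na2 hxb nb1 nb2 hxc nc1 nc2 hxd nd1 nd2 hden.
subst m n q o z u v.
rewrite !det3_comb in hA hB hC hA2 hB2 hC2 hxa na1 na2 hxb nb1 nb2 hxc nc1 nc2 hxd nd1 nd2.
have [exp hN] := xp_simplify hA2 hB2 hC2 hA hB hC hAC hBD hxp.
have pa : (Dtr (0,1,0) (0,0,1) (1,0,0) * det3 F1 F2 F3) * (Dtr (0,0,1) tu tq * det3 F1 F2 F3) - (Dtr (0,1,0) (0,0,1) tq * det3 F1 F2 F3) * (Dtr (0,0,1) tu (1,0,0) * det3 F1 F2 F3) = (Dtr (1,0,0) tq (0,0,1) * det3 F1 F2 F3) * (Dtr (0,1,0) (0,0,1) tu * det3 F1 F2 F3) by rewrite /Dtr /=; ring.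
have ea := one_minus (mulf_neq0 na1 na2) hxa pa.
have pb : (Dtr tq (0,1,0) tm * det3 F1 F2 F3) * (Dtr (0,1,0) (0,0,1) (1,0,0) * det3 F1 F2 F3) - (Dtr tq (0,1,0) (1,0,0) * det3 F1 F2 F3) * (Dtr (0,1,0) (0,0,1) tm * det3 F1 F2 F3) = (Dtr tm (1,0,0) (0,1,0) * det3 F1 F2 F3) * (Dtr tq (0,1,0) (0,0,1) * det3 F1 F2 F3) by rewrite /Dtr /=; ring.
have eb := one_minus (mulf_neq0 nb1 nb2) hxb pb.
have pc : (Dtr (0,1,0) tq tu * det3 F1 F2 F3) * (Dtr tq (1,0,0) (0,0,1) * det3 F1 F2 F3) - (Dtr (0,1,0) tq (0,0,1) * det3 F1 F2 F3) * (Dtr tq (1,0,0) tu * det3 F1 F2 F3) = (Dtr tu (0,0,1) tq * det3 F1 F2 F3) * (Dtr (0,1,0) tq (1,0,0) * det3 F1 F2 F3) by rewrite /Dtr /=; ring.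
have ec := one_minus (mulf_neq0 nc1 nc2) hxc pc.
have pd : (Dtr (0,0,1) (0,1,0) tv * det3 F1 F2 F3) * (Dtr (0,1,0) tq tu * det3 F1 F2 F3) - (Dtr (0,0,1) (0,1,0) tu * det3 F1 F2 F3) * (Dtr (0,1,0) tq tv * det3 F1 F2 F3) = (Dtr tv tu (0,1,0) * det3 F1 F2 F3) * (Dtr (0,0,1) (0,1,0) tq * det3 F1 F2 F3) by rewrite /Dtr /=; ring.
have ed := one_minus (mulf_neq0 nd1 nd2) hxd pd.
have ecb : 1 - xb = (Dtr tq (0,1,0) (1,0,0) * det3 F1 F2 F3) * (Dtr (0,1,0) (0,0,1) tm * det3 F1 F2 F3) / ((Dtr tq (0,1,0) tm * det3 F1 F2 F3) * (Dtr (0,1,0) (0,0,1) (1,0,0) * det3 F1 F2 F3)) by rewrite hxb; ring.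
have ecd : 1 - xd = (Dtr (0,0,1) (0,1,0) tu * det3 F1 F2 F3) * (Dtr (0,1,0) tq tv * det3 F1 F2 F3) / ((Dtr (0,0,1) (0,1,0) tv * det3 F1 F2 F3) * (Dtr (0,1,0) tq tu * det3 F1 F2 F3)) by rewrite hxd; ring.
apply: (final_alg (mulf_neq0 hN hB2) (mulf_neq0 na1 na2) (mulf_neq0 nb1 nb2) (mulf_neq0 nc1 nc2) (mulf_neq0 nd1 nd2) exp ea eb ecb ec ecd hden).
rewrite /Dtr /=; ring.
Qed.

Lemma core_vec_o (F1 F2 F3 am2 am1 a0 a1 a2 a3 a4 : 'rV[R]_3) (tam2 tam1 ta2 ta4 : R * R * R)
  (sa ta sb tb sc tc td xp xa xb xc xd : R) :
  am2 = comb F1 F2 F3 tam2 ->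
  am1 = comb F1 F2 F3 tam1 ->
  a0 = comb F1 F2 F3 (0,0,1) ->
  a1 = comb F1 F2 F3 (0,1,0) ->
  a2 = comb F1 F2 F3 ta2 ->
  a3 = comb F1 F2 F3 (1,0,0) ->
  a4 = comb F1 F2 F3 ta4 ->
  det3 F1 F2 F3 != 0 ->
  sa * det3 a1 a4 a3 + ta * det3 a1 a4 a0 = 0 -> sb * det3 am1 a2 a3 + tb * det3 am1 a2 a0 = 0 -> sc * det3 am2 a1 a3 + tc * det3 am2 a1 a0 = 0 ->
  sa * tc - ta * sc != 0 -> sb * td != 0 ->
  xp = (sa * tb - ta * sb) * (sc * td) / ((sa * tc - ta * sc) * (sb * td)) ->
  det3 a1 a4 a0 != 0 -> det3 am1 a2 a0 != 0 -> det3 am2 a1 a0 != 0 ->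
  xa = 1 - det3 a1 a0 a2 * det3 a0 am1 a3 / (det3 a1 a0 a3 * det3 a0 am1 a2) -> det3 a1 a0 a3 != 0 -> det3 a0 am1 a2 != 0 ->
  xb = 1 - det3 a2 a1 a3 * det3 a1 a0 a4 / (det3 a2 a1 a4 * det3 a1 a0 a3) -> det3 a2 a1 a4 != 0 -> det3 a1 a0 a3 != 0 ->
  xc = 1 - det3 a1 a2 a0 * det3 a2 a3 am1 / (det3 a1 a2 am1 * det3 a2 a3 a0) -> det3 a1 a2 am1 != 0 -> det3 a2 a3 a0 != 0 ->
  xd = 1 - det3 a0 a1 am1 * det3 a1 a2 am2 / (det3 a0 a1 am2 * det3 a1 a2 am1) -> det3 a0 a1 am2 != 0 -> det3 a1 a2 am1 != 0 ->
  xa * xc - (1 - xd) * (1 - xb) != 0 ->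
  xp = xa * ((xb + xc - 1) / (xa * xc - (1 - xd) * (1 - xb))).
Proof.
move=> Ham2 Ham1 Ha0 Ha1 Ha2 Ha3 Ha4 hF hA hB hC hAC hBD hxp hA2 hB2 hC2 hxa na1 na2 hxb nb1 nb2 hxc nc1 nc2 hxd nd1 nd2 hden.
subst am2 am1 a0 a1 a2 a3 a4.
rewrite !det3_comb in hA hB hC hA2 hB2 hC2 hxa na1 na2 hxb nb1 nb2 hxc nc1 nc2 hxd nd1 nd2.
have [exp hN] := xp_simplify hA2 hB2 hC2 hA hB hC hAC hBD hxp.
have pa : (Dtr (0,1,0) (0,0,1) (1,0,0) * det3 F1 F2 F3) * (Dtr (0,0,1) tam1 ta2 * det3 F1 F2 F3) - (Dtr (0,1,0) (0,0,1) ta2 * det3 F1 F2 F3) * (Dtr (0,0,1) tam1 (1,0,0) * det3 F1 F2 F3) = (Dtr (1,0,0) ta2 (0,0,1) * det3 F1 F2 F3) * (Dtr (0,1,0) (0,0,1) tam1 * det3 F1 F2 F3) by rewrite /Dtr /=; ring.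
have ea := one_minus (mulf_neq0 na1 na2) hxa pa.
have pb : (Dtr ta2 (0,1,0) ta4 * det3 F1 F2 F3) * (Dtr (0,1,0) (0,0,1) (1,0,0) * det3 F1 F2 F3) - (Dtr ta2 (0,1,0) (1,0,0) * det3 F1 F2 F3) * (Dtr (0,1,0) (0,0,1) ta4 * det3 F1 F2 F3) = (Dtr ta4 (1,0,0) (0,1,0) * det3 F1 F2 F3) * (Dtr ta2 (0,1,0) (0,0,1) * det3 F1 F2 F3) by rewrite /Dtr /=; ring.
have eb := one_minus (mulf_neq0 nb1 nb2) hxb pb.
have pc : (Dtr (0,1,0) ta2 tam1 * det3 F1 F2 F3) * (Dtr ta2 (1,0,0) (0,0,1) * det3 F1 F2 F3) - (Dtr (0,1,0) ta2 (0,0,1) * det3 F1 F2 F3) * (Dtr ta2 (1,0,0) tam1 * det3 F1 F2 F3) = (Dtr tam1 (0,0,1) ta2 * det3 F1 F2 F3) * (Dtr (0,1,0) ta2 (1,0,0) * det3 F1 F2 F3) by rewrite /Dtr /=; ring.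
have ec := one_minus (mulf_neq0 nc1 nc2) hxc pc.
have pd : (Dtr (0,0,1) (0,1,0) tam2 * det3 F1 F2 F3) * (Dtr (0,1,0) ta2 tam1 * det3 F1 F2 F3) - (Dtr (0,0,1) (0,1,0) tam1 * det3 F1 F2 F3) * (Dtr (0,1,0) ta2 tam2 * det3 F1 F2 F3) = (Dtr tam2 tam1 (0,1,0) * det3 F1 F2 F3) * (Dtr (0,0,1) (0,1,0) ta2 * det3 F1 F2 F3) by rewrite /Dtr /=; ring.
have ed := one_minus (mulf_neq0 nd1 nd2) hxd pd.
have ecb : 1 - xb = (Dtr ta2 (0,1,0) (1,0,0) * det3 F1 F2 F3) * (Dtr (0,1,0) (0,0,1) ta4 * det3 F1 F2 F3) / ((Dtr ta2 (0,1,0) ta4 * det3 F1 F2 F3) * (Dtr (0,1,0) (0,0,1) (1,0,0) * det3 F1 F2 F3)) by rewrite hxb; ring.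
have ecd : 1 - xd = (Dtr (0,0,1) (0,1,0) tam1 * det3 F1 F2 F3) * (Dtr (0,1,0) ta2 tam2 * det3 F1 F2 F3) / ((Dtr (0,0,1) (0,1,0) tam2 * det3 F1 F2 F3) * (Dtr (0,1,0) ta2 tam1 * det3 F1 F2 F3)) by rewrite hxd; ring.
apply: (final_alg (mulf_neq0 hN hB2) (mulf_neq0 na1 na2) (mulf_neq0 nb1 nb2) (mulf_neq0 nc1 nc2) (mulf_neq0 nd1 nd2) exp ea eb ecb ec ecd hden).
rewrite /Dtr /=; ring.
Qed.

End Alg.

Section G. Variable R : realType.

Lemma comb2 (al be a b c d : R) (U V : 'rV[R]_3) :
  al *: (a *: U + b *: V) + be *: (c *: U + d *: V) = (al * a + be * c) *: U + (al * b + be * d) *: V.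
Proof. apply: row3P; rewrite !mxE; ring. Qed.

Lemma det3_xyy (U V : 'rV[R]_3) : det3 U V V = 0.
Proof. rewrite det3E /Dtr /cv /=; ring. Qed.

Lemma det3_xyx (U V : 'rV[R]_3) : det3 U V U = 0.
Proof. rewrite det3E /Dtr /cv /=; ring. Qed.

Lemma pprime_corner (U V X1 Y1 Y2 A B Z1 W1 Z2 W2 Q1 Q2 : 'rV[R]_3) (r sa ta sb tb z1 z2 w1 w2 u1 u2 v1 v2 : R) :
  A = sa *: U + ta *: V -> B = sb *: U + tb *: V ->
  Z1 = z1 *: X1 + z2 *: Y1 -> W1 = w1 *: X1 + w2 *: Y1 ->
  Z2 = u1 *: V + u2 *: Y2 -> W2 = v1 *: V + v2 *: Y2 ->
  meet A B Z1 W1 Q1 -> meet A B Z2 W2 Q2 -> is_chi A B Q1 Q2 r ->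
  exists sc tc td, [/\ sc * det3 X1 Y1 U + tc * det3 X1 Y1 V = 0, sa * tc - ta * sc != 0,
     sb * td != 0 & r = (sa * tb - ta * sb) * (sc * td) / ((sa * tc - ta * sc) * (sb * td))].
Proof.
move=> eA eB eZ1 eW1 eZ2 eW2 m1 m2 ch.
have [al [be [eQ1 _]]] := meet_first m1.
have [ga [de [eQ2 _]]] := meet_first m2.
rewrite eA eB comb2 in eQ1; rewrite eA eB comb2 in eQ2.
set sc := al * sa + be * sb in eQ1; set tc := al * ta + be * tb in eQ1.
set sd := ga * sa + de * sb in eQ2; set td := ga * ta + de * tb in eQ2.
case: m1 => _ [hZ1 [hW1 nZW1]] _ _ [_ h1].
case: m2 => _ [hZ2 [hW2 nZW2]] h3 _ [_ h2].
have c1 : sc * det3 X1 Y1 U + tc * det3 X1 Y1 V = 0.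
  have dd := dep2 eZ1 eW1 hZ1 hW1 nZW1.
  move: h1; rewrite eZ1 eW1 det3_lin12 => /eqP; rewrite mulf_eq0 (negPf dd) /= => /eqP.
  by rewrite eQ1 det3_lin3.
have sd0 : sd = 0.
  have dd := dep2 eZ2 eW2 hZ2 hW2 nZW2.
  move: h2; rewrite eZ2 eW2 det3_lin12 => /eqP; rewrite mulf_eq0 (negPf dd) /= => /eqP.
  rewrite eQ2 det3_lin3 (det3_xyx V Y2) mulr0 addr0 => /eqP; rewrite mulf_eq0 => /orP[/eqP //|/eqP hV].
  exfalso; apply: h3; split.
  - by rewrite eA eB eZ2 det3_lin12 det3_lin3 det3_xyy (det3_cyc U V Y2) hV !(mulr0, addr0).
  - by rewrite eA eB eW2 det3_lin12 det3_lin3 det3_xyy (det3_cyc U V Y2) hV !(mulr0, addr0).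
have eQ2' : Q2 = 0 *: U + td *: V by rewrite eQ2 sd0.
have [er n1 n2] := chi_lemma ch eA eB eQ1 eQ2'.
exists sc, tc, td; move: n2 er; rewrite !mulr0 !subr0 => n2 er; split=> //.
Qed.
End G.

Section M. Variable R : realType.

Definition crd (F1 F2 F3 w : 'rV[R]_3) : R * R * R :=
  (det3 w F2 F3 / det3 F1 F2 F3, det3 F1 w F3 / det3 F1 F2 F3, det3 F1 F2 w / det3 F1 F2 F3).

Lemma cramer (F1 F2 F3 w : 'rV[R]_3) : det3 F1 F2 F3 != 0 -> w = comb F1 F2 F3 (crd F1 F2 F3 w).
Proof.
move=> h; move: h; rewrite /crd det3E /Dtr /cv /= => h.
apply: row3P; rewrite /comb /= !mxE !det3E /Dtr /cv /=.
- by field; rewrite ?h.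
- by field; rewrite ?h.
- by field; rewrite ?h.
Qed.

Lemma comb_e1 (F1 F2 F3 : 'rV[R]_3) : F1 = comb F1 F2 F3 (1, 0, 0).
Proof. by rewrite /comb /= scale1r !scale0r !addr0. Qed.
Lemma comb_e2 (F1 F2 F3 : 'rV[R]_3) : F2 = comb F1 F2 F3 (0, 1, 0).
Proof. by rewrite /comb /= scale1r !scale0r add0r addr0. Qed.
Lemma comb_e3 (F1 F2 F3 : 'rV[R]_3) : F3 = comb F1 F2 F3 (0, 0, 1).
Proof. by rewrite /comb /= scale1r !scale0r !add0r. Qed.

Lemma nz_cyc1 (a b c : 'rV[R]_3) : det3 a b c != 0 -> det3 b c a != 0.
Proof. by rewrite det3_cyc. Qed.
Lemma nz_cyc2 (a b c : 'rV[R]_3) : det3 a b c != 0 -> det3 c a b != 0.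
Proof. by rewrite det3_cyc det3_cyc. Qed.
Lemma nz_sw1 (a b c : 'rV[R]_3) : det3 a b c != 0 -> det3 b a c != 0.
Proof. by rewrite det3_sw oppr_eq0. Qed.
Lemma nz_sw2 (a b c : 'rV[R]_3) : det3 a b c != 0 -> det3 a c b != 0.
Proof. by move/nz_sw1/nz_cyc1. Qed.
Lemma nz_sw3 (a b c : 'rV[R]_3) : det3 a b c != 0 -> det3 c b a != 0.
Proof. by move/nz_cyc2/nz_sw2. Qed.

End M.



Section N. Variable R : realType.

Lemma aux_even (P P' : int -> 'rV[R]_3) (x x' : int -> R) :
  nice3 P ->
  (forall j : int, meet (P (j - 2)) (P (j + 1)) (P (j - 1)) (P (j + 2)) (P' j)) ->
  corner_invariants P x -> corner_invariants P' x' ->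
  x (-2) * x (-1) - (1 - x 1) * (1 - x (-4)) != 0 ->
  x' 0 = x (-2) * ((x (-4) + x (-1) - 1) / (x (-2) * x (-1) - (1 - x 1) * (1 - x (-4)))).
Proof.
move=> nc hP' cP cP' hden.
have [sa [ta [ePa cA]]] := meet_second (hP' (-2)).
have [sb [tb [ePb cB]]] := meet_first (hP' (-1)).
have [s0 [t0 [eP0 _]]] := meet_second (hP' 0).
have [s1 [t1 [eP1 _]]] := meet_first (hP' 1).
have [s1' [t1' [eP1' _]]] := meet_second (hP' 1).
have [s2 [t2 [eP2 _]]] := meet_first (hP' 2).
have [[Q1 [Q2 [m1 m2 ch]]] _] := cP' 0.
have [sc [tc [td [cC hAC hBD exp]]]] := pprime_corner ePa ePb eP0 eP1 eP1' eP2 m1 m2 ch.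
have [n5a n5b n5c n5d] := nc (-5).
have [n4a n4b n4c n4d] := nc (-4).
have [n3a n3b n3c n3d] := nc (-3).
have [n2a n2b n2c n2d] := nc (-2).
have [n1a n1b n1c n1d] := nc (-1).
have E1 : det3 (P (-2)) (P (-1)) (P (-4)) != 0 := nz_cyc1 n5d.
have E2 : det3 (P (-1)) (P 0) (P (-3)) != 0 := nz_cyc1 n4d.
have E3 : det3 (P 0) (P 1) (P (-2)) != 0 := nz_cyc1 n3d.
have E4 : det3 (P (-1)) (P (-2)) (P 1) != 0 := nz_sw1 n2a.
have E5 : det3 (P (-2)) (P (-3)) (P 0) != 0 := nz_sw1 n3a.
have E6 : det3 (P 0) (P (-1)) (P 2) != 0 := nz_sw1 n1a.
have hF : det3 (P (-3)) (P (-1)) (P 0) != 0 := n4d.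
have A2 : det3 (P (-4)) (P (-1)) (P 0) != 0 := n4c.
have B2 : det3 (P (-2)) (P 1) (P 0) != 0 := nz_sw2 n3d.
have C2 : det3 (P (-1)) (P 2) (P 0) != 0 := nz_sw2 n1a.
have [[q1 [q2 [a1 a2 ach]]] _] := cP (-2).
have xb := corner_lemma a1 a2 ach E1 E2.
have [[q3 [q4 [b1 b2 bch]]] [q5 [q6 [c1 c2 cch]]]] := cP (-1).
have xa := corner_lemma b1 b2 bch E2 E3.
have xc := corner_lemma c1 c2 cch E4 E5.
have [_ [q7 [q8 [d1 d2 dch]]]] := cP 0.
have xd := corner_lemma d1 d2 dch E6 E4.
have := core_vec_e (cramer (P (-4)) hF) (comb_e1 (P (-3)) (P (-1)) (P 0)) (cramer (P (-2)) hF)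
   (comb_e2 (P (-3)) (P (-1)) (P 0)) (comb_e3 (P (-3)) (P (-1)) (P 0)) (cramer (P 1) hF) (cramer (P 2) hF)
   hF cA cB cC hAC hBD exp A2 B2 C2 xa E2 E3 xb E1 E2 xc E4 E5 xd E6 E4 hden.
by [].
Qed.

Lemma aux_odd (P P' : int -> 'rV[R]_3) (x x' : int -> R) :
  nice3 P ->
  (forall j : int, meet (P (j - 2)) (P (j + 1)) (P (j - 1)) (P (j + 2)) (P' j)) ->
  corner_invariants P x -> corner_invariants P' x' ->
  x 2 * x 3 - (1 - x 5) * (1 - x 0) != 0 ->
  x' 1 = x 3 * ((x 2 + x 5 - 1) / (x 2 * x 3 - (1 - x 5) * (1 - x 0))).
Proof.
move=> nc hP' cP cP' hden.
have [sa0 [ta0 [ePa cA]]] := meet_first (hP' 2).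
have ePa' : P' 2 = ta0 *: P 3 + sa0 *: P 0 by rewrite ePa addrC.
have cA' : ta0 * det3 (P 1) (P 4) (P 3) + sa0 * det3 (P 1) (P 4) (P 0) = 0 by rewrite addrC.
have [sb0 [tb0 [ePb cB]]] := meet_second (hP' 1).
have ePb' : P' 1 = tb0 *: P 3 + sb0 *: P 0 by rewrite ePb addrC.
have cB' : tb0 * det3 (P (-1)) (P 2) (P 3) + sb0 * det3 (P (-1)) (P 2) (P 0) = 0 by rewrite addrC.
have [s0 [t0 [eP0 _]]] := meet_first (hP' 0).
have [s1 [t1 [eP1 _]]] := meet_second (hP' (-1)).
have [s2 [t2 [eP2 _]]] := meet_first (hP' (-1)).
have eP2' : P' (-1) = t2 *: P 0 + s2 *: P (-3) by rewrite eP2 addrC.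
have [s3 [t3 [eP3 _]]] := meet_second (hP' (-2)).
have eP3' : P' (-2) = t3 *: P 0 + s3 *: P (-3) by rewrite eP3 addrC.
have [_ [Q1 [Q2 [m1 m2 ch]]]] := cP' 0.
have [sc [tc [td [cC hAC hBD exp]]]] := pprime_corner ePa' ePb' eP0 eP1 eP2' eP3' m1 m2 ch.
have [n3a n3b n3c n3d] := nc (-3).
have [n2a n2b n2c n2d] := nc (-2).
have [n1a n1b n1c n1d] := nc (-1).
have [n0a n0b n0c n0d] := nc 0.
have [p1a p1b p1c p1d] := nc 1.
have O1 : det3 (P 1) (P 0) (P 3) != 0 := nz_sw1 n0a.
have O2 : det3 (P 0) (P (-1)) (P 2) != 0 := nz_sw1 n1a.
have O3 : det3 (P 2) (P 1) (P 4) != 0 := nz_sw1 p1a.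
have O4 : det3 (P 1) (P 2) (P (-1)) != 0 := nz_cyc1 n2d.
have O5 : det3 (P 2) (P 3) (P 0) != 0 := nz_cyc1 n1d.
have O6 : det3 (P 0) (P 1) (P (-2)) != 0 := nz_cyc1 n3d.
have hF : det3 (P 3) (P 1) (P 0) != 0 := nz_sw3 n0a.
have A2 : det3 (P 1) (P 4) (P 0) != 0 := nz_cyc1 n0b.
have B2 : det3 (P (-1)) (P 2) (P 0) != 0 := nz_sw2 n1a.
have C2 : det3 (P (-2)) (P 1) (P 0) != 0 := nz_sw2 n3d.
have [[q1 [q2 [a1 a2 ach]]] [q3 [q4 [b1 b2 bch]]]] := cP 1.
have xc := corner_lemma a1 a2 ach O4 O5.
have xa := corner_lemma b1 b2 bch O1 O2.
have [[q5 [q6 [c1 c2 cch]]] _] := cP 0.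
have xd := corner_lemma c1 c2 cch O6 O4.
have [_ [q7 [q8 [d1 d2 dch]]]] := cP 2.
have xb := corner_lemma d1 d2 dch O3 O1.
have hden' : x 3 * x 2 - (1 - x 0) * (1 - x 5) != 0.
  by rewrite (mulrC (x 3)) (mulrC (1 - x 0)).
have := core_vec_o (cramer (P (-2)) hF) (cramer (P (-1)) hF) (comb_e3 (P 3) (P 1) (P 0))
   (comb_e2 (P 3) (P 1) (P 0)) (cramer (P 2) hF) (comb_e1 (P 3) (P 1) (P 0)) (cramer (P 4) hF)
   hF cA' cB' cC hAC hBD exp A2 B2 C2 xa O1 O2 xb O3 O1 xc O4 O5 xd O6 O4 hden'.
move=> H; apply: (eq_trans H); congr (_ * (_ / _)); ring.
Qed.

End N.

End Aux.
Import Aux.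
Unset Implicit Arguments. Set Strict Implicit.

Theorem mainTheorem15 (R : realType) (n : nat) (P P' : int -> 'rV[R]_3)
  (x x' : int -> R) :
  twisted_ngon n P -> nice3 P ->
  (forall i : int, meet (P (i - 2)) (P (i + 1)) (P (i - 1)) (P (i + 2)) (P' i)) ->
  corner_invariants P x -> corner_invariants P' x' ->
  forall i : int,
    (x (2 * i - 2) * x (2 * i - 1)
       - (1 - x (2 * i + 1)) * (1 - x (2 * i - 4)) != 0 ->
     x' (2 * i) = x (2 * i - 2) * ((x (2 * i - 4) + x (2 * i - 1) - 1) /
       (x (2 * i - 2) * x (2 * i - 1) - (1 - x (2 * i + 1)) * (1 - x (2 * i - 4)))))
    /\
    (x (2 * i + 2) * x (2 * i + 3)
       - (1 - x (2 * i + 5)) * (1 - x (2 * i)) != 0 ->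
     x' (2 * i + 1) = x (2 * i + 3) * ((x (2 * i + 2) + x (2 * i + 5) - 1) /
       (x (2 * i + 2) * x (2 * i + 3) - (1 - x (2 * i + 5)) * (1 - x (2 * i))))).
Proof.
move=> _ nc hP' cP cP' i.
have ncQ : nice3 (fun k => P (i + k)).
  by move=> j /=; move: (nc (i + j)); rewrite -!addrA.
have hQ : forall j : int, meet (P (i + (j - 2))) (P (i + (j + 1))) (P (i + (j - 1)))
    (P (i + (j + 2))) (P' (i + j)).
  by move=> j; move: (hP' (i + j)); rewrite -!addrA.
have cQ : corner_invariants (fun k => P (i + k)) (fun k => x (2 * i + k)).
  move=> j; have [e o] := cP (i + j); split.
  - by move: e; rewrite /corner_even /= mulrDr -!addrA.
  - by move: o; rewrite /corner_odd /= mulrDr -!addrA.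
have cQ' : corner_invariants (fun k => P' (i + k)) (fun k => x' (2 * i + k)).
  move=> j; have [e o] := cP' (i + j); split.
  - by move: e; rewrite /corner_even /= mulrDr -!addrA.
  - by move: o; rewrite /corner_odd /= mulrDr -!addrA.
split=> hden.
- have := aux_even (P := fun k => P (i + k)) (P' := fun k => P' (i + k)) ncQ hQ cQ cQ' hden.
  by rewrite /= addr0.
- have e0 : x (2 * i) = x (2 * i + 0) by rewrite addr0.
  rewrite e0 in hden *.
  exact: (aux_odd (P := fun k => P (i + k)) (P' := fun k => P' (i + k)) ncQ hQ cQ cQ' hden).
Qed.
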